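(* Let $q$ be a prime power, $n\ge k\ge0$ integers, $V_1,\dots,V_\ell$ subspaces of $\mathbb{F}_q^n$ each of dimension at most $k$, and $\delta_1,\dots,\delta_\ell\ge0$ integers. The following are equivalent: (i) for every nonempty $\Omega\subseteq[\ell]$, $\dim\big(\bigcap_{i\in\Omega}V_i\big)\le k-\sum_{i\in\Omega}\delta_i$; (ii) $\sum_{i=1}^\ell\delta_i\le k$ and the $k$-tuple $(T_1,\dots,T_k)$ consisting of $\delta_i$ copies of $V_i$ for each $i\in[\ell]$ together with $k-\sum_{i=1}^\ell\delta_i$ additional copies of $\{0\}$ is a generic kernel pattern, i.e. $\dim\big(\bigcap_{i\in\Omega'}T_i\big)\le k-|\Omega'|$ for every nonempty $\Omega'\subseteq[k]$.
   Context: The copies are counted as distinct entries of the tuple: the set of positions holding copies of $V_i$ is disjoint from the positions holding copies of any other $V_{i'}$ (even if $V_i=V_{i'}$) and from the positions of the additional copies of $\{0\}$ (even if $V_i=\{0\}$). *)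

(* Defs.v *)
From HB Require Import structures.
From mathcomp Require Import all_boot all_order all_algebra all_field.
Set Implicit Arguments. Unset Strict Implicit. Unset Printing Implicit Defensive.
Import GRing.Theory Num.Theory.

(* Positions are
   indexed by 'I_k; when sum_i delta_i <= k the underlying sequence has size
   exactly k. *)
Definition kernel_tuple (F : fieldType) (n k l : nat)
    (V : 'I_l -> {vspace 'rV[F]_n}) (delta : 'I_l -> nat) : 'I_k -> {vspace 'rV[F]_n} :=
  fun j => nth 0%VS
    (flatten [seq nseq (delta i) (V i) | i <- enum 'I_l]
       ++ nseq (k - \sum_(i < l) delta i) 0%VS) j.

Definition generic_kernel_pattern (F : fieldType) (n k : nat)
    (T : 'I_k -> {vspace 'rV[F]_n}) : Prop :=
  forall Om : {set 'I_k}, Om != set0 ->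
    (\dim (\bigcap_(i in Om) T i)%VS <= k - #|Om|)%N.

(* Main.v *)
Require Import Defs.
From HB Require Import structures.
From mathcomp Require Import all_boot all_order all_algebra all_field.
From mathcomp Require Import zify.
Import GRing.Theory Num.Theory.
Set Implicit Arguments. Unset Strict Implicit.

Definition owners (k l : nat) (delta : 'I_l -> nat) : seq (option 'I_l) :=
  flatten [seq nseq (delta i) (Some i) | i <- enum 'I_l]
    ++ nseq (k - \sum_(i < l) delta i) None.

Lemma count_owners k l (delta : 'I_l -> nat) (P : pred (option 'I_l)) :
  count P (owners k delta) =
  (\sum_(i < l) P (Some i) * delta i + P None * (k - \sum_(i < l) delta i))%N.
Proof.
rewrite /owners count_cat count_flatten count_nseq sumnE !big_map -enumT big_enum /=.
by congr (_ + _); apply: eq_bigr => i _; rewrite count_nseq.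
Qed.

Lemma size_owners k l (delta : 'I_l -> nat) :
  (\sum_(i < l) delta i <= k)%N -> size (owners k delta) = k.
Proof.
move=> H; rewrite -count_predT count_owners /=.
under eq_bigr do rewrite mul1n.
by rewrite mul1n subnKC.
Qed.

Lemma card_owners k l (delta : 'I_l -> nat) (P : pred (option 'I_l)) :
  size (owners k delta) = k ->
  #|[set j : 'I_k | P (nth None (owners k delta) j)]| = count P (owners k delta).
Proof.
move=> Hs; rewrite -sum1_card -sum1_count (big_nth None) Hs big_mkord.
by apply: eq_bigl => j; rewrite inE.
Qed.

Lemma count_owners_in k l (delta : 'I_l -> nat) (Om : {set 'I_l}) :
  count (fun o => if o is Some i then i \in Om else false) (owners k delta)
  = \sum_(i in Om) delta i.
Proof.
rewrite count_owners /= mul0n addn0 [RHS]big_mkcond /=.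
by apply: eq_bigr => i _; case: (i \in Om); rewrite ?mul1n ?mul0n.
Qed.

Definition fV (F : fieldType) n l (V : 'I_l -> {vspace 'rV[F]_n}) (o : option 'I_l)
  : {vspace 'rV[F]_n} := if o is Some i then V i else 0%VS.

Lemma kernel_tupleE (F : fieldType) n k l (V : 'I_l -> {vspace 'rV[F]_n}) delta :
  (\sum_(i < l) delta i <= k)%N ->
  forall j : 'I_k, kernel_tuple V delta j = fV V (nth None (owners k delta) j).
Proof.
move=> H j; rewrite /kernel_tuple.
have -> : flatten [seq nseq (delta i) (V i) | i <- enum 'I_l]
       ++ nseq (k - \sum_(i < l) delta i) 0%VS = map (fV V) (owners k delta).
  rewrite /owners map_cat map_nseq /= map_flatten -map_comp; congr (_ ++ _).
  by congr flatten; apply: eq_map => i /=; rewrite map_nseq.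
by rewrite (nth_map None) // size_owners.
Qed.

Theorem mainTheorem13 (F : finFieldType) (n k l : nat) (hkn : (k <= n)%N)
    (V : 'I_l -> {vspace 'rV[F]_n}) (hV : forall i, (\dim (V i) <= k)%N)
    (delta : 'I_l -> nat) :
  (forall Om : {set 'I_l}, Om != set0 ->
     ((\dim (\bigcap_(i in Om) V i)%VS)%:Z <= k%:Z - (\sum_(i in Om) delta i)%:Z)%R)
  <->
  ((\sum_(i < l) delta i <= k)%N /\
   @generic_kernel_pattern F n k (@kernel_tuple F n k l V delta)).
Proof.
set so := owners k delta.
split.
- move=> H.
  have Hs : (\sum_(i < l) delta i <= k)%N.
    case: (boolP ([set: 'I_l] == set0)) => [/eqP E | NE].
      rewrite big_pred0 // => i; have : i \in [set: 'I_l] by rewrite in_setT.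
      by rewrite E inE.
    have E : (\sum_(i in [set: 'I_l]) delta i = \sum_(i < l) delta i)%N.
      by apply: eq_bigl => i; rewrite inE.
    have := H _ NE; rewrite E => Hd; lia.
  split => // Om' NOm'.
  have Hsz := size_owners Hs.
  case: (boolP [exists j in Om', nth None so j == None]).
    move=> /existsP [j /andP [jO /eqP jN]].
    have : (\bigcap_(i in Om') kernel_tuple V delta i <= 0)%VS.
      by apply: (bigcapv_inf j jO); rewrite kernel_tupleE // -/so jN /= subvv.
    rewrite subv0 => /eqP ->; by rewrite dimv0.
  rewrite negb_exists => /forallP NN.
  have own : forall j, j \in Om' -> exists i, nth None so j = Some i.
    move=> j jO; have := NN j; rewrite jO /=.
    by case: (nth None so j) => [i|] // _; exists i.
  set Om := [set i | [exists j in Om', nth None so j == Some i]].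
  have NOm : Om != set0.
    case/set0Pn: NOm' => j jO; case: (own j jO) => i Hi.
    apply/set0Pn; exists i; rewrite inE; apply/existsP; exists j; by rewrite jO Hi eqxx.
  have Hc : (#|Om'| <= \sum_(i in Om) delta i)%N.
    rewrite -(count_owners_in k delta) -card_owners //; apply: subset_leq_card.
    apply/subsetP => j jO; rewrite inE; case: (own j jO) => i Hi; rewrite Hi.
    rewrite inE; apply/existsP; exists j; by rewrite jO Hi eqxx.
  have Hsub : (\bigcap_(j in Om') kernel_tuple V delta j <= \bigcap_(i in Om) V i)%VS.
    apply/subv_bigcapP => i; rewrite inE => /existsP [j /andP [jO /eqP Hj]].
    by apply: (bigcapv_inf j jO); rewrite kernel_tupleE // -/so Hj /= subvv.
  have Hd := dimvS Hsub.
  have HO := H _ NOm.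
  have HOk : (\sum_(i in Om) delta i <= \sum_(i < l) delta i)%N.
    rewrite [X in (_ <= X)%N](bigID (fun i => i \in Om)) /=; exact: leq_addr.
  move: Hd HO Hc HOk. move: (\dim (\bigcap_(i in Om) V i)) => a.
  move: (\sum_(i in Om) delta i) => b.
  move: (\dim (\bigcap_(j in Om') kernel_tuple V delta j)) => c. lia.
- case=> Hs G Om NOm.
  have Hsz := size_owners Hs.
  case: (posnP (\sum_(i in Om) delta i)) => [-> | Hpos].
    case/set0Pn: NOm => i0 iO.
    have : (\bigcap_(i in Om) V i <= V i0)%VS by apply: (bigcapv_inf i0 iO); rewrite subvv.
    move=> /dimvS Hd; have := hV i0; lia.
  set Om' := [set j : 'I_k | (fun o => if o is Some i then i \in Om else false)
                               (nth None so j)].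
  have Hc : #|Om'| = \sum_(i in Om) delta i by rewrite card_owners // count_owners_in.
  have NOm' : Om' != set0 by rewrite -card_gt0 Hc.
  have Hsub : (\bigcap_(i in Om) V i <= \bigcap_(j in Om') kernel_tuple V delta j)%VS.
    apply/subv_bigcapP => j; rewrite inE kernel_tupleE // -/so.
    case: (nth None so j) => [i|] //= iO.
    by apply: (bigcapv_inf i iO); rewrite subvv.
  have Hd := dimvS Hsub.
  have HG := G _ NOm'.
  have HOk : (\sum_(i in Om) delta i <= \sum_(i < l) delta i)%N.
    rewrite [X in (_ <= X)%N](bigID (fun i => i \in Om)) /=; exact: leq_addr.
  move: Hd HG Hc HOk Hs. move: (\dim (\bigcap_(i in Om) V i)) => a.
  move: (\sum_(i in Om) delta i) => b.
  move: (\dim (\bigcap_(j in Om') kernel_tuple V delta j)) => c.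
  move=> h1 h2 h3 h4 h5; have hb : (b <= k)%N by lia.
  have ha : (a <= k - b)%N by rewrite -h3; exact: leq_trans h1 h2.
  by rewrite subzn // lez_nat.
Qed.
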